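(* Let $\{s_j\}_{j=1}^\infty$ be a countable compact subset of $[0,1]$ containing $0$. Let $U(x,y)=\left(\frac{x}{2},\frac{y+1}{2}\right)$ and $D_j(x,y)=\left(\frac{x+s_j}{2},\frac{y}{2}\right)$ for $j\ge1$, and let $K'\subset\mathbb{R}^2$ be the unique non-empty compact set with $K'=U(K')\cup\bigcup_{j\ge1}D_j(K')$. Then $K'$ has empty interior. *)

(* Defs.v *)
From Stdlib Require Export Reals Rtopology.
Open Scope R_scope.

Definition pt := (R * R)%type.

Definition ball2 (p : pt) (e : R) (q : pt) : Prop :=
  (fst q - fst p)^2 + (snd q - snd p)^2 < e^2.

Definition open2 (O : pt -> Prop) : Prop :=
  forall p, O p -> exists e, 0 < e /\ forall q, ball2 p e q -> O q.

Definition compact2 (K : pt -> Prop) : Prop :=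
  forall (I : Type) (O : I -> pt -> Prop),
    (forall i, open2 (O i)) ->
    (forall p, K p -> exists i, O i p) ->
    exists l : list I, forall p, K p -> exists i, List.In i l /\ O i p.

Definition image2 (f : pt -> pt) (K : pt -> Prop) (q : pt) : Prop :=
  exists p, K p /\ q = f p.

Definition interior_empty2 (K : pt -> Prop) : Prop :=
  ~ (exists p e, 0 < e /\ forall q, ball2 p e q -> K q).

Definition Umap (p : pt) : pt := (fst p / 2, (snd p + 1) / 2).
Definition Dmap (sj : R) (p : pt) : pt := ((fst p + sj) / 2, snd p / 2).

(* Main.v *)
Require Import Defs.
From Stdlib Require Import Reals Rtopology ClassicalEpsilon Classical Lra Lia Psatz ZArith.
Open Scope R_scope.

Definition closedR (P : R -> Prop) : Prop :=
  forall z, (forall eps, 0 < eps -> exists e, P e /\ Rabs (e - z) < eps) -> P z.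
Definition holesR (P : R -> Prop) : Prop :=
  forall a b, a < b -> exists x, a < x < b /\ ~ P x.

Lemma closed_gap P x : closedR P -> ~ P x ->
  exists d, 0 < d /\ forall e, P e -> d <= Rabs (e - x).
Proof.
  intros HP Hx. apply NNPP; intro H. apply Hx, HP. intros eps Heps.
  apply NNPP; intro H2. apply H. exists eps; split; auto.
  intros e He. apply Rnot_lt_le. intro Hl. apply H2. eauto.
Qed.

Lemma nowhere_step P a b : closedR P -> holesR P -> a < b ->
  exists a' b', a < a' /\ a' < b' /\ b' < b /\ forall z, a' <= z <= b' -> ~ P z.
Proof.
  intros HC HH Hab. destruct (HH a b Hab) as [x [[H1 H2] Hx]].
  destruct (closed_gap P x HC Hx) as [d [Hd Hg]].
  set (r := Rmin (d/2) (Rmin ((x-a)/2) ((b-x)/2))).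
  assert (r > 0) by (unfold r; repeat apply Rmin_glb_lt; lra).
  assert (r <= d/2) by (unfold r; apply Rmin_l).
  assert (r <= (x-a)/2) by (unfold r; eapply Rle_trans; [apply Rmin_r|apply Rmin_l]).
  assert (r <= (b-x)/2) by (unfold r; eapply Rle_trans; [apply Rmin_r|apply Rmin_r]).
  exists (x - r), (x + r). repeat split; try lra.
  intros z Hz Pz. specialize (Hg z Pz). unfold Rabs in Hg; destruct Rcase_abs in Hg; lra.
Qed.

Lemma baire1 (F : nat -> R -> Prop) : (forall j, closedR (F j)) -> (forall j, holesR (F j)) ->
  forall a b, a < b -> exists x, a < x < b /\ forall j, ~ F j x.
Proof.
  intros HC HH a b Hab.
  set (Q j (p q : R * R) := fst p < fst q /\ fst q < snd q /\ snd q < snd p /\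
          forall z, fst q <= z <= snd q -> ~ F j z).
  set (next j p := epsilon (inhabits p) (Q j p)).
  assert (Hn : forall j p, fst p < snd p -> Q j p (next j p)).
  { intros j p Hp. apply epsilon_spec. destruct (nowhere_step (F j) _ _ (HC j) (HH j) Hp)
      as [a' [b' H]]. exists (a', b'). exact H. }
  set (sq := fix sq n := match n with O => next O (a,b) | S m => next (S m) (sq m) end).
  assert (Hs : forall n, Q n (match n with O => (a,b) | S m => sq m end) (sq n)).
  { induction n.
    - apply Hn. simpl; lra.
    - apply Hn. destruct n; destruct IHn as [_ [? _]]; auto. }
  assert (Hlt : forall n, fst (sq n) < snd (sq n)).
  { intro n; destruct (Hs n) as [_ [? _]]; auto. }
  assert (Hmono : forall n k, fst (sq n) <= fst (sq (n + k)%nat) /\ snd (sq (n+k)%nat) <= snd (sq n)).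
  { intros n k; induction k.
    - rewrite Nat.add_0_r; lra.
    - replace (n + S k)%nat with (S (n + k)) by lia.
      destruct (Hs (S (n+k))) as [? [? [? _]]]. simpl in *. lra. }
  assert (Hab' : forall n m, fst (sq n) <= snd (sq m)).
  { intros n m. destruct (Nat.le_ge_cases n m) as [H|H].
    - destruct (Hmono n (m - n)%nat) as [H1 _]. replace (n + (m-n))%nat with m in H1 by lia.
      specialize (Hlt m). lra.
    - destruct (Hmono m (n - m)%nat) as [_ H1]. replace (m + (n-m))%nat with n in H1 by lia.
      specialize (Hlt n). lra. }
  set (E r := exists n, r = fst (sq n)).
  destruct (completeness E) as [l [Hub Hl]].
  { exists (snd (sq O)). intros r [n ->]. apply Hab'. }
  { exists (fst (sq O)). exists O; auto. }
  assert (Hin : forall n, fst (sq n) <= l <= snd (sq n)).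
  { intro n; split. apply Hub; exists n; auto. apply Hl. intros r [k ->]. apply Hab'. }
  exists l. split.
  - destruct (Hs O) as [H1 [_ [H3 _]]]. specialize (Hin O). change (fst (a,b)) with a in H1. change (snd (a,b)) with b in H3. lra.
  - intro j. destruct (Hs j) as [_ [_ [_ H4]]]. apply H4. apply Hin.
Qed.

Lemma closedR_of_closed_set P : closed_set P -> closedR P.
Proof.
  intros HC z Hz. apply NNPP; intro Hn.
  destruct (HC z Hn) as [d Hd].
  destruct (Hz d (cond_pos d)) as [e [Pe He]].
  apply (Hd e); auto.
Qed.

Lemma closed0 : closedR (fun e => e = 0).
Proof.
  intros z Hz. apply NNPP; intro H.
  destruct (Hz (Rabs z)) as [e [-> He]]. apply Rabs_pos_lt; auto.
  rewrite Rminus_0_l, Rabs_Ropp in He; lra.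
Qed.

Lemma holes0 : holesR (fun e => e = 0).
Proof.
  intros a b Hab. destruct (Rle_or_lt ((a+b)/2) 0).
  - exists ((a + (a+b)/2)/2). split. lra. lra.
  - exists ((b + (a+b)/2)/2). split. lra. lra.
Qed.

Lemma closed_half P : closedR P -> closedR (fun e => exists e', P e' /\ e = e'/2).
Proof.
  intros HC z Hz. exists (2*z). split; [|lra]. apply HC. intros eps Heps.
  destruct (Hz (eps/2)) as [e [[e' [Pe ->]] He]]. lra.
  exists e'. split; auto.
  replace (e' - 2*z) with (2 * (e'/2 - z)) by lra. rewrite Rabs_mult, Rabs_pos_eq; lra.
Qed.

Lemma holes_half P : holesR P -> holesR (fun e => exists e', P e' /\ e = e'/2).
Proof.
  intros HH a b Hab. destruct (HH (2*a) (2*b)) as [x [Hx Px]]. lra.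
  exists (x/2). split. lra. intros [e' [Pe He]]. apply Px.
  replace x with e' by lra. auto.
Qed.


Lemma closed_sum (s : nat -> R) (hcomp : compact (fun x => exists j, x = s j)) P : closedR P -> closedR (fun e => exists j e', P e' /\ e = (s j + e')/2).
Proof.
  intros HC z Hz.
  assert (Hch : forall k : nat, exists q : nat * R, P (snd q) /\
     Rabs ((s (fst q) + snd q)/2 - z) < / INR (S k)).
  { intro k. destruct (Hz (/ INR (S k))) as [e [[j [e' [Pe ->]]] He]].
    apply Rinv_0_lt_compat, lt_0_INR; lia. exists (j, e'); auto. }
  set (q k := epsilon (inhabits (O, 0)) (fun q => P (snd q) /\
     Rabs ((s (fst q) + snd q)/2 - z) < / INR (S k))).
  assert (Hq : forall k, P (snd (q k)) /\ Rabs ((s (fst (q k)) + snd (q k))/2 - z) < / INR (S k)).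
  { intro k. apply epsilon_spec, Hch. }
  destruct (Bolzano_Weierstrass (fun k => s (fst (q k))) _ hcomp) as [l Hl].
  { intro k; eauto. }
  assert (Sl : exists j, l = s j).
  { apply (closedR_of_closed_set _ (compact_P2 _ hcomp)). intros eps Heps.
    destruct (Hl (disc l (mkposreal eps Heps)) O) as [p [_ Hp]].
    { exists (mkposreal eps Heps). intros y Hy; auto. }
    exists (s (fst (q p))). split; eauto. }
  destruct Sl as [j Hj]. exists j, (2*z - l). split; [|lra].
  apply HC. intros eps Heps.
  destruct (archimed (4/eps)) as [Ha _].
  set (N := Z.to_nat (up (4/eps))).
  assert (HN : 4/eps < INR N).
  { unfold N. rewrite INR_IZR_INZ, Z2Nat.id. lra. apply le_IZR.
    assert (0 < 4/eps) by (apply Rdiv_lt_0_compat; lra). lra. }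
  destruct (Hl (disc l (mkposreal (eps/2) ltac:(lra))) N) as [p [Hp Hd]].
  { exists (mkposreal (eps/2) ltac:(lra)). intros y Hy; auto. }
  unfold disc in Hd; simpl in Hd.
  destruct (Hq p) as [Pp Hp2].
  exists (snd (q p)). split; auto.
  assert (/ INR (S p) < eps/4).
  { assert (INR N <= INR (S p)) by (apply le_INR; lia).
    assert (0 < 4/eps) by (apply Rdiv_lt_0_compat; lra).
    replace (eps/4) with (/ (4/eps)) by (field; lra).
    apply Rinv_lt_contravar. nra. lra. }
  revert Hd Hp2. generalize (s (fst (q p))) (snd (q p)). intros u v Hd Hp2.
  unfold Rabs in *. repeat destruct Rcase_abs; lra.
Qed.

Lemma holes_sum (s : nat -> R) (hcomp : compact (fun x => exists j, x = s j)) P : closedR P -> holesR P -> holesR (fun e => exists j e', P e' /\ e = (s j + e')/2).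
Proof.
  intros HC HH a b Hab.
  destruct (baire1 (fun j z => P (2*z - s j))) with (a := a) (b := b) as [x [Hx Hn]]; auto.
  - intros j z Hz. apply HC. intros eps Heps. destruct (Hz (eps/2)) as [e [Pe He]]. lra.
    exists (2*e - s j). split; auto.
    replace (2*e - s j - (2*z - s j)) with (2*(e - z)) by lra.
    rewrite Rabs_mult, Rabs_pos_eq; lra.
  - intros j c d Hcd. destruct (HH (2*c - s j) (2*d - s j)) as [y [Hy Py]]. lra.
    exists ((y + s j)/2). split. lra. replace (2 * ((y + s j)/2) - s j) with y by lra. auto.
  - exists x. split; auto. intros [j [e' [Pe He]]]. apply (Hn j).
    replace (2*x - s j) with e' by lra. auto.
Qed.

Fixpoint Rset (s : nat -> R) (n M : nat) : R -> Prop :=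
  match n with
  | O => fun e => e = 0
  | S n' => if Nat.ltb M (2^n') then fun e => exists j e', Rset s n' M e' /\ e = (s j + e')/2
            else fun e => exists e', Rset s n' (M - 2^n') e' /\ e = e'/2
  end.

Lemma Rset_ok s (hcomp : compact (fun x => exists j, x = s j)) n : forall M,
  closedR (Rset s n M) /\ holesR (Rset s n M).
Proof.
  induction n; intro M; simpl.
  - split; [apply closed0|apply holes0].
  - destruct (Nat.ltb M (2^n)).
    + destruct (IHn M). split; [apply closed_sum|apply holes_sum]; auto.
    + destruct (IHn (M - 2^n)%nat). split; [apply closed_half|apply holes_half]; auto.
Qed.

Lemma sq_abs_lt a b m : a^2 + b^2 < m^2 -> 0 < m -> Rabs a < m.
Proof. intros H Hm. unfold Rabs; destruct Rcase_abs; nra. Qed.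

Lemma K_bounded K : compact2 K -> exists B, forall p, K p -> Rabs (fst p) < B /\ Rabs (snd p) < B.
Proof.
  intro hK.
  destruct (hK nat (fun n q => Rabs (fst q) < INR n /\ Rabs (snd q) < INR n)) as [l Hl].
  - intros n p [H1 H2]. exists (Rmin (INR n - Rabs (fst p)) (INR n - Rabs (snd p))).
    split. apply Rmin_glb_lt; lra.
    intros q Hq. unfold ball2 in Hq.
    assert (Hm : 0 < Rmin (INR n - Rabs (fst p)) (INR n - Rabs (snd p))) by (apply Rmin_glb_lt; lra).
    assert (A1 := sq_abs_lt _ _ _ Hq Hm).
    assert (A2 : Rabs (snd q - snd p) < Rmin (INR n - Rabs (fst p)) (INR n - Rabs (snd p))).
    { apply (sq_abs_lt _ (fst q - fst p)); auto. lra. }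
    assert (B1 := Rmin_l (INR n - Rabs (fst p)) (INR n - Rabs (snd p))).
    assert (B2 := Rmin_r (INR n - Rabs (fst p)) (INR n - Rabs (snd p))).
    revert A1 A2 B1 B2 H1 H2. generalize (Rmin (INR n - Rabs (fst p)) (INR n - Rabs (snd p))).
    intros r A1 A2 B1 B2 H1 H2.
    unfold Rabs in *. repeat destruct Rcase_abs; split; lra.
  - intros p _. destruct (INR_unbounded (Rabs (fst p) + Rabs (snd p))) as [n Hn].
    exists n. assert (H1 := Rabs_pos (fst p)). assert (H2 := Rabs_pos (snd p)). split; lra.
  - exists (List.fold_right (fun i acc => Rmax (INR i) acc) 0 l).
    assert (Hf : forall i, List.In i l -> INR i <= List.fold_right (fun i acc => Rmax (INR i) acc) 0 l).
    { clear Hl. induction l as [|a l IH]; simpl; intros i Hi; [contradiction|].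
      destruct Hi as [->|Hi]. apply Rmax_l. eapply Rle_trans; [apply IH; auto|apply Rmax_r]. }
    intros p Kp. destruct (Hl p Kp) as [i [Hi [H1 H2]]]. specialize (Hf i Hi). split; lra.
Qed.

Lemma sup_contract (K : pt -> Prop) (f : pt -> R) b : (exists B, forall p, K p -> f p <= B) ->
  (forall p, K p -> exists q, K q /\ f p <= f q / 2 + b) -> forall p, K p -> f p <= 2*b.
Proof.
  intros [B HB] Hs p Kp.
  destruct (completeness (fun r => exists p, K p /\ r = f p)) as [g [Hu Hl]].
  - exists B. intros r [q [Kq ->]]. auto.
  - exists (f p); eauto.
  - assert (g <= g/2 + b).
    { apply Hl. intros r [q [Kq ->]]. destruct (Hs q Kq) as [q' [Kq' H]].
      assert (f q' <= g) by (apply Hu; eauto). lra. }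
    assert (f p <= g) by (apply Hu; eauto). lra.
Qed.

Lemma INR_lt_pow n : INR n < 2^n.
Proof. induction n. simpl; lra. rewrite S_INR. simpl. assert (1 <= 2^n) by (apply pow_R1_Rle; lra). lra. Qed.

Lemma decomp (s : nat -> R) (K : pt -> Prop)
  (hfix : forall q, K q <-> (image2 Umap K q \/ exists j, image2 (Dmap (s j)) K q)) q :
  K q -> (exists p, K p /\ fst q = fst p / 2 /\ snd q = (snd p + 1)/2) \/
         (exists j p, K p /\ fst q = (fst p + s j)/2 /\ snd q = snd p / 2).
Proof.
  intro Kq. apply hfix in Kq. destruct Kq as [[p [Kp ->]]|[j [p [Kp ->]]]].
  - left. exists p. unfold Umap; simpl; auto.
  - right. exists j, p. unfold Dmap; simpl; auto.
Qed.

Lemma tri (s : nat -> R) (hrange : forall j, 0 <= s j <= 1) (K : pt -> Prop) (hK : compact2 K)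
  (hfix : forall q, K q <-> (image2 Umap K q \/ exists j, image2 (Dmap (s j)) K q)) p :
  K p -> 0 <= fst p /\ 0 <= snd p /\ fst p + snd p <= 1.
Proof.
  destruct (K_bounded K hK) as [B HB].
  assert (Hab : forall x, Rabs x < B -> -B < x < B) by (intros x Hx; unfold Rabs in Hx; destruct Rcase_abs in Hx; lra).
  intro Kp. split; [|split].
  - assert (H := sup_contract K (fun p => - fst p) 0). simpl in H.
    enough (- fst p <= 2 * 0) by lra. apply H; auto.
    + exists B. intros q Kq. destruct (HB q Kq) as [H1 _]. apply Hab in H1. lra.
    + intros q Kq. destruct (decomp s K hfix q Kq) as [[r [Kr [E1 E2]]]|[j [r [Kr [E1 E2]]]]];
        exists r; split; auto; rewrite E1; try specialize (hrange j); lra.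
  - assert (H := sup_contract K (fun p => - snd p) 0). simpl in H.
    enough (- snd p <= 2 * 0) by lra. apply H; auto.
    + exists B. intros q Kq. destruct (HB q Kq) as [_ H1]. apply Hab in H1. lra.
    + intros q Kq. destruct (decomp s K hfix q Kq) as [[r [Kr [E1 E2]]]|[j [r [Kr [E1 E2]]]]];
        exists r; split; auto; rewrite E2; lra.
  - assert (H := sup_contract K (fun p => fst p + snd p) (1/2)). simpl in H.
    enough (fst p + snd p <= 2 * (1/2)) by lra. apply H; auto.
    + exists (2*B). intros q Kq. destruct (HB q Kq) as [H1 H2]. apply Hab in H1. apply Hab in H2. lra.
    + intros q Kq. destruct (decomp s K hfix q Kq) as [[r [Kr [E1 E2]]]|[j [r [Kr [E1 E2]]]]];
        exists r; split; auto; rewrite E1, E2; try specialize (hrange j); lra.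
Qed.

Lemma INR_pow2 n : INR (2^n) = 2^n.
Proof. rewrite pow_INR. reflexivity. Qed.

Lemma row (s : nat -> R) (hrange : forall j, 0 <= s j <= 1) (K : pt -> Prop) (hK : compact2 K)
  (hfix : forall q, K q <-> (image2 Umap K q \/ exists j, image2 (Dmap (s j)) K q)) n :
  forall M x t, 0 < t < 1 -> K (x, (INR M + t) / 2^n) ->
  exists e, Rset s n M e /\ 0 <= x - e <= (1 - t) / 2^n.
Proof.
  assert (Tri := tri s hrange K hK hfix).
  induction n; intros M x t Ht Kp.
  - simpl in *. exists 0. split; auto. destruct (Tri _ Kp) as [T1 [T2 T3]]. simpl in *.
    assert (0 <= INR M) by apply pos_INR. rewrite Rdiv_1_r in *. lra.
  - assert (HP : 0 < 2^n) by (apply pow_lt; lra).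
    assert (HM := pos_INR M).
    simpl Rset. change (2^S n) with (2 * 2^n) in *.
    destruct (decomp s K hfix _ Kp) as [[r [Kr [E1 E2]]]|[j [r [Kr [E1 E2]]]]]; simpl in E1, E2;
      destruct (Tri _ Kr) as [T1 [T2 T3]];
      destruct (Nat.ltb M (2^n)) eqn:Hlt.
    + apply Nat.ltb_lt in Hlt. exfalso.
      assert (INR M + 1 <= 2^n).
      { apply le_INR in Hlt. rewrite S_INR, INR_pow2 in Hlt. lra. }
      assert (Hy : INR M + t = (snd r + 1) * 2^n).
      { replace (INR M + t) with ((INR M + t)/(2*2^n) * (2*2^n)) by (field; lra).
        rewrite E2. field. }
      nra.
    + apply Nat.ltb_ge in Hlt. apply le_INR in Hlt. rewrite INR_pow2 in Hlt.
      assert (Hy : INR M + t = (snd r + 1) * 2^n).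
      { replace (INR M + t) with ((INR M + t)/(2*2^n) * (2*2^n)) by (field; lra).
        rewrite E2. field. }
      assert (Hm : INR (M - 2^n) = INR M - 2^n).
      { rewrite minus_INR, INR_pow2; auto. apply INR_le. rewrite INR_pow2. lra. }
      destruct (IHn (M - 2^n)%nat (fst r) t Ht) as [e' [Re He']].
      { replace ((INR (M - 2^n) + t) / 2^n) with (snd r). rewrite <- surjective_pairing; auto.
        rewrite Hm. apply (Rmult_eq_reg_r (2^n)). field_simplify; lra. lra. }
      exists (e'/2). split. exists e'; auto.
      rewrite E1. assert ((1-t)/(2*2^n) = ((1-t)/2^n)/2) by (field; lra). lra.
    + apply Nat.ltb_lt in Hlt.
      assert (Hy : INR M + t = snd r * 2^n).
      { replace (INR M + t) with ((INR M + t)/(2*2^n) * (2*2^n)) by (field; lra).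
        rewrite E2. field. }
      destruct (IHn M (fst r) t Ht) as [e' [Re He']].
      { replace ((INR M + t) / 2^n) with (snd r). rewrite <- surjective_pairing; auto.
        apply (Rmult_eq_reg_r (2^n)). field_simplify; lra. lra. }
      exists ((s j + e')/2). split. exists j, e'; auto.
      rewrite E1. assert ((1-t)/(2*2^n) = ((1-t)/2^n)/2) by (field; lra). lra.
    + apply Nat.ltb_ge in Hlt. apply le_INR in Hlt. rewrite INR_pow2 in Hlt. exfalso.
      assert (Hy : INR M + t = snd r * 2^n).
      { replace (INR M + t) with ((INR M + t)/(2*2^n) * (2*2^n)) by (field; lra).
        rewrite E2. field. }
      nra.
Qed.

Theorem mainTheorem7 (s : nat -> R)
  (hcomp : compact (fun x => exists j, x = s j))
  (hrange : forall j, 0 <= s j <= 1)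
  (hzero : exists j, s j = 0)
  (K : pt -> Prop)
  (hne : exists p, K p)
  (hK : compact2 K)
  (hfix : forall q, K q <-> (image2 Umap K q \/ exists j, image2 (Dmap (s j)) K q)) :
  interior_empty2 K.
Proof.
  intros [[x0 y0] [e [He Hb]]].
  assert (Box : forall x y, Rabs (x - x0) < e/2 -> Rabs (y - y0) < e/2 -> K (x, y)).
  { intros x y Hx Hy. apply Hb. unfold ball2; simpl.
    revert Hx Hy. unfold Rabs; repeat destruct Rcase_abs; intros; nra. }
  assert (K0 : K (x0, y0)) by (apply Box; rewrite Rminus_diag, Rabs_R0; lra).
  destruct (tri s hrange K hK hfix _ K0) as [_ [Hy0 _]]. simpl in Hy0.
  destruct (INR_unbounded (4/e)) as [n Hn].
  assert (Hpn := INR_lt_pow n).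
  set (P := 2^n) in *.
  assert (HP : 4/e < P) by lra.
  assert (HP0 : 0 < P) by (apply Rlt_trans with (4/e); auto; apply Rdiv_lt_0_compat; lra).
  assert (HeP : 4 < e * P). { assert (4/e * e = 4) by (field; lra). nra. }
  assert (HP1 : 2/P < e/2).
  { unfold Rdiv. apply (Rmult_lt_reg_r P); auto. rewrite Rmult_assoc, Rinv_l by lra. nra. }
  destruct (archimed (y0 * P)) as [Hu1 Hu2].
  set (M := Z.to_nat (up (y0 * P))).
  assert (HM : INR M = IZR (up (y0 * P))).
  { unfold M. rewrite INR_IZR_INZ, Z2Nat.id; auto. apply le_IZR. nra. }
  destruct (Rset_ok s hcomp n M) as [HC HH].
  destruct (HH (x0 - e/2) (x0 + e/2)) as [x [Hx Rx]]. lra.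
  destruct (closed_gap _ x HC Rx) as [d [Hd Hg]].
  set (t := 1 - Rmin (1/2) (d/2)).
  assert (Ht1 : Rmin (1/2) (d/2) <= d/2) by apply Rmin_r.
  assert (Ht2 : Rmin (1/2) (d/2) <= 1/2) by apply Rmin_l.
  assert (Ht3 : 0 < Rmin (1/2) (d/2)) by (apply Rmin_glb_lt; lra).
  assert (Ht : 0 < t < 1) by (unfold t; lra).
  destruct (row s hrange K hK hfix n M x t Ht) as [e' [Re He']].
  { apply Box. unfold Rabs; destruct Rcase_abs; lra.
    fold P. rewrite HM.
    assert (HiP : 0 < / P) by (apply Rinv_0_lt_compat; lra).
    assert (E1 : (IZR (up (y0 * P)) + t) / P - y0 = (IZR (up (y0 * P)) + t - y0 * P) * / P) by (field; lra).
    assert (E2 : (IZR (up (y0 * P)) + t) / P - (y0 + 2/P) = (IZR (up (y0 * P)) + t - y0 * P - 2) * / P) by (field; lra).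
    assert (A1 : y0 < (IZR (up (y0 * P)) + t) / P) by nra.
    assert (A2 : (IZR (up (y0 * P)) + t) / P < y0 + 2/P) by nra.
    unfold Rabs; destruct Rcase_abs; lra. }
  specialize (Hg e' Re). fold P in He'.
  assert ((1 - t)/P <= 1 - t).
  { assert (1 <= P) by (unfold P; apply pow_R1_Rle; lra).
    apply (Rmult_le_reg_r P); auto. unfold Rdiv. rewrite Rmult_assoc, Rinv_l by lra. nra. }
  unfold Rabs in Hg; destruct Rcase_abs in Hg; unfold t in *; lra.
Qed.
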